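(* Let $A\in\mathbb{R}^{n\times m}$ with $n<m$ have nonzero columns $\alpha_1,\dots,\alpha_m$, let $C=A^TA$ with entries $c_{ij}=\langle\alpha_i,\alpha_j\rangle$, and for each $i\in[m]$ define $\nu(i)=\max_{j\neq i}\frac{|c_{ij}|}{c_{ii}}$ and $\rho(i)=\frac{\nu(i)}{\nu(i)+1}$. Let $x\in\mathbb{R}^m$ have support $\mathcal{S}\subseteq[m]$ and put $\rho(\mathcal{S})=\sum_{i\in\mathcal{S}}\rho(i)$. If $\rho(\mathcal{S})<\frac12$, then $x$ is the unique minimizer of $\min_{z\in\mathbb{R}^m}\|z\|_1$ subject to $Az=Ax$ (i.e., every $\ell_1$ minimizer $\hat{x}$ of this problem equals $x$).
   Context: $[m]=\{1,\dots,m\}$. The support of $x$ is the set of indices $i$ with $x_i\neq 0$. The maximum in $\nu(i)$ is over $j\in[m]$, $j\neq i$. *)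

(* Defs.v *)
From mathcomp Require Import all_boot all_order all_algebra.
Set Implicit Arguments. Unset Strict Implicit. Unset Printing Implicit Defensive.
Import Order.TTheory GRing.Theory Num.Theory.
Local Open Scope ring_scope.

Definition gram (R : realFieldType) n m (A : 'M[R]_(n, m)) : 'M[R]_m := A^T *m A.

(* nu(i) = max_{j <> i} |c_ij| / c_ii  (all terms are >= 0, so 0 is a neutral start) *)
Definition nu (R : realFieldType) n m (A : 'M[R]_(n, m)) (i : 'I_m) : R :=
  \big[Num.max/0]_(j < m | j != i) (`|gram A i j| / gram A i i).

Definition rho (R : realFieldType) n m (A : 'M[R]_(n, m)) (i : 'I_m) : R :=
  nu A i / (nu A i + 1).

Definition supp (R : realFieldType) m (x : 'cV[R]_m) : {set 'I_m} :=
  [set i | x i 0 != 0].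

Definition rhoS (R : realFieldType) n m (A : 'M[R]_(n, m)) (S : {set 'I_m}) : R :=
  \sum_(i in S) rho A i.

Definition l1norm (R : realFieldType) m (z : 'cV[R]_m) : R := \sum_i `|z i 0|.

Definition l1_minimizer (R : realFieldType) n m (A : 'M[R]_(n, m)) (b : 'cV[R]_n)
  (z : 'cV[R]_m) : Prop :=
  A *m z = b /\ forall w : 'cV[R]_m, A *m w = b -> l1norm z <= l1norm w.

(* Main.v *)
Require Import Defs.
From mathcomp Require Import all_boot all_order all_algebra.
From mathcomp Require Import reals.
From mathcomp Require Import ring lra.
Import Order.TTheory GRing.Theory Num.Theory.
Local Open Scope ring_scope.

Section S.
Variables (R : realType) (n m : nat) (A : 'M[R]_(n, m)).

Lemma gram_ii_gt0 i : col i A != 0 -> 0 < gram A i i.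
Proof.
move=> hc; rewrite /gram !mxE.
have -> : \sum_j A^T i j * A j i = \sum_j (A j i) ^+ 2.
  by apply: eq_bigr => j _; rewrite mxE expr2.
have s0 : 0 <= \sum_j (A j i) ^+ 2 by apply: sumr_ge0 => j _; exact: sqr_ge0.
rewrite lt_def s0 andbT psumr_eq0; last by move=> j _; rewrite sqr_ge0.
apply: contra hc => /allP H; apply/eqP/matrixP => j k.
rewrite !mxE; have := H j (mem_index_enum j).
by rewrite implyTb sqrf_eq0 => /eqP.
Qed.

Lemma nu_ge0 i : 0 <= nu A i.
Proof. exact: bigmax_ge_id. Qed.

Lemma key (h : 'cV[R]_m) i : col i A != 0 -> A *m h = 0 ->
  `|h i 0| <= rho A i * l1norm h.
Proof.
move=> hc Ah.
have cpos := @gram_ii_gt0 i hc.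
have nu0 := nu_ge0 i.
have G : (gram A *m h) i 0 = 0 by rewrite /gram -mulmxA Ah mulmx0 mxE.
rewrite mxE (bigD1 i) //= in G.
have E : gram A i i * h i 0 = - \sum_(j | j != i) gram A i j * h j 0.
  by apply/eqP; rewrite -subr_eq0 opprK G.
have L1 : gram A i i * `|h i 0| <= \sum_(j | j != i) `|gram A i j| * `|h j 0|.
  have -> : gram A i i * `|h i 0| = `|gram A i i * h i 0|
    by rewrite normrM (ger0_norm (ltW cpos)).
  rewrite E normrN; apply: le_trans (ler_norm_sum _ _ _) _.
  by apply: ler_sum => j _; rewrite normrM.
have L3 : \sum_(j | j != i) `|gram A i j| * `|h j 0| <=
          \sum_(j | j != i) gram A i i * nu A i * `|h j 0|.
  apply: ler_sum => j ji; apply: ler_wpM2r; first exact: normr_ge0.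
  have : `|gram A i j| / gram A i i <= nu A i by apply: le_bigmax_cond.
  by rewrite ler_pdivrMr // mulrC.
have L4 : \sum_(j | j != i) `|h j 0| = l1norm h - `|h i 0|.
  by rewrite /l1norm [X in _ = X - _](bigD1 i) //= addrC addrK.
have L : gram A i i * `|h i 0| <= gram A i i * (nu A i * (l1norm h - `|h i 0|)).
  by rewrite -L4 mulr_sumr mulr_sumr; apply: le_trans L1 (le_trans L3 _);
     apply: ler_sum => j _; rewrite mulrA.
have L2 : `|h i 0| * (nu A i + 1) <= nu A i * l1norm h.
  move: L; rewrite ler_pM2l // => L; rewrite mulrDr mulr1; lra.
rewrite /rho mulrAC ler_pdivlMr //; lra.
Qed.
End S.

Lemma ineq (R : realType) (n m : nat) (A : 'M[R]_(n, m)) (x h : 'cV[R]_m) :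
  (forall i : 'I_m, col i A != 0) -> A *m h = 0 ->
  l1norm x + (1 - 2 * rhoS A (supp x)) * l1norm h <= l1norm (x + h).
Proof.
move=> hc Ah.
have T : forall i, `|x i 0| + `|h i 0| - 2 * (if i \in supp x then `|h i 0| else 0)
                  <= `|(x + h) i 0|.
  move=> i; rewrite mxE inE; case: eqP => [->|_].
    rewrite add0r normr0 add0r mulr0 subr0 //.
  have := ler_normD (x i 0 + h i 0) (- h i 0).
  rewrite addrK normrN => H /=; lra.
have S1 : \sum_(i in supp x) `|h i 0| <= rhoS A (supp x) * l1norm h.
  rewrite /rhoS mulr_suml; apply: ler_sum => i _; exact: key.
apply: le_trans (ler_sum _ (fun i _ => T i)).
rewrite sumrB !big_split /= -mulr_sumr -big_mkcond /=.
rewrite -/(l1norm x) -/(l1norm h).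
lra.
Qed.

Lemma l1_ge0 (R : realType) m (z : 'cV[R]_m) : 0 <= l1norm z.
Proof. by apply: sumr_ge0 => i _; exact: normr_ge0. Qed.

Theorem theorem1 (R : realType) (n m : nat) (A : 'M[R]_(n, m)) (x : 'cV[R]_m) :
  (n < m)%N ->
  (forall i : 'I_m, col i A != 0) ->
  rhoS A (supp x) < 1 / 2 ->
  l1_minimizer A (A *m x) x /\
  (forall xh : 'cV[R]_m, l1_minimizer A (A *m x) xh -> xh = x).
Proof.
move=> _ hc hr.
have HA : forall w, A *m w = A *m x -> A *m (w - x) = 0.
  by move=> w Hw; rewrite mulmxBr Hw subrr.
split.
  split=> // w Hw.
  have := @ineq R n m A x (w - x) hc (HA w Hw); rewrite [x + _]addrC subrK.
  have := @l1_ge0 R m (w - x); move=> h0 H; apply: le_trans H.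
  rewrite lerDl; apply: mulr_ge0 => //; lra.
move=> xh [Hx Hmin].
have H1 := Hmin x erefl.
have := @ineq R n m A x (xh - x) hc (HA xh Hx); rewrite [x + _]addrC subrK => H2.
have h0 := @l1_ge0 R m (xh - x).
have Z : l1norm (xh - x) = 0.
  apply/eqP; rewrite eq_le h0 andbT.
  have P : 0 < 1 - 2 * rhoS A (supp x) by lra.
  rewrite -(pmulr_rle0 _ P); lra.
apply/eqP; rewrite -subr_eq0; apply/eqP/matrixP => i j.
rewrite ord1 mxE; move: Z; rewrite /l1norm => /eqP; rewrite psumr_eq0.
  move=> /allP/(_ i (mem_index_enum i)); rewrite implyTb normr_eq0 !mxE; by move/eqP.
by move=> k _; exact: normr_ge0.
Qed.
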